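(* Let $X$ satisfy assumptions (A) described in the context, and let $\nu$, $a_1$ be as there. Then for every $r>0$, $$\left|\frac{\nu'(r)}{\nu(r)}\right|\le\frac{3(a_1-1)}{r\wedge1}.$$ Moreover, for $0<r_1<r_2<\infty$, $$\frac{\nu(r_1)}{\nu(r_2)}\le\left(\frac{r_2}{r_1}\right)^{3(a_1-1)}e^{3(a_1-1)(r_2-r_1)}$$ and $$\nu(r_1)-\nu(r_2)\le\frac32(a_1-1)\,\frac{\nu(r_1)}{1\wedge r_1}\,(r_2-r_1)\left(1+\frac{r_2}{r_1}\right).$$
   Context: Assumptions (A): (H0) $X$ is a pure-jump isotropic Lévy process in $\mathbb{R}^d$ with characteristic exponent $\psi$, whose Lévy measure is infinite with density $\nu(x)=\nu(|x|)$. (H1) $\nu(r)$ is nonincreasing and absolutely continuous on $(0,\infty)$, $-\nu'(r)/r$ is nonincreasing on $(0,\infty)$ (where $\nu'$ is the version, defined at every $r>0$, of the function with $\nu(r)=-\int_r^\infty\nu'(\rho)d\rho$), and there is $a_1$ with $\nu(r)\le a_1\nu(r+1)$ for $r\ge1$ and $\nu(r)\le a_1\nu(2r)$ for $0<r\le1$. (H2) There is $a_2$ such that for every $x_0$, $r\in(0,1]$ and every $h\ge0$ on $\mathbb{R}^d$ harmonic in $B(x_0,r)$, $\sup_{B(x_0,r/2)}h\le a_2\inf_{B(x_0,r/2)}h$ (a Borel $f$ is harmonic in open $D$ if $f(x)=E^xf(X_{\tau_B})$, absolutely convergent, for $x\in B$, for all bounded open $B$ with $\overline B\subset D$, $\tau_B=\inf\{t>0:X_t\notin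 B\}$). *)

(* Defs.v *)
From HB Require Import structures.
From mathcomp Require Import all_boot all_order all_algebra.
From mathcomp Require Import all_classical all_reals all_analysis.
Set Implicit Arguments. Unset Strict Implicit. Unset Printing Implicit Defensive.
Import Order.TTheory GRing.Theory Num.Theory.
Import numFieldNormedType.Exports.
Local Open Scope classical_set_scope.
Local Open Scope ring_scope.

(* (H0), part relevant to nu: x |-> nu(|x|) is the density on R^d (d >= 1)
   of an infinite Levy measure.  Written in polar coordinates:
   int_{R^d} g(|x|) dx = c_d int_0^oo g(r) r^(d-1) dr with c_d in (0,oo). *)
Definition infinite_levy_radial_density {R : realType} (d : nat) (nu : R -> R) :=
  [/\ (0 < d)%N,
      (forall r, 0 < r -> 0 <= nu r),
      measurable_fun (`]0%R, +oo[ : set R) nu,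
      (\int[lebesgue_measure]_(r in (`]0%R, +oo[ : set R)) (Num.min 1 (r ^+ 2) * nu r * r ^+ d.-1)%:E
          < +oo)%E &
      (\int[lebesgue_measure]_(r in (`]0%R, +oo[ : set R)) (nu r * r ^+ d.-1)%:E = +oo)%E].

Definition H1 {R : realType} (nu nu' : R -> R) (a1 : R) :=
  [/\
      (forall r s, 0 < r -> r <= s -> nu s <= nu r),
      (* absolute continuity, with nu' the everywhere defined version such that
         nu(r) = - int_r^oo nu'(rho) drho *)
      (forall r, 0 < r ->
         lebesgue_measure.-integrable (`[r, +oo[ : set R) (fun rho => (nu' rho)%:E) /\
         nu r = - fine (\int[lebesgue_measure]_(rho in (`[r, +oo[ : set R)) (nu' rho)%:E)),
      (forall r s, 0 < r -> r <= s -> - nu' s / s <= - nu' r / r),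
      (forall r, 1 <= r -> nu r <= a1 * nu (r + 1)) &
      (forall r, 0 < r -> r <= 1 -> nu r <= a1 * nu (2 * r))].

(* Main.v *)
Require Import Defs.
From HB Require Import structures.
From mathcomp Require Import all_boot all_order all_algebra.
From mathcomp Require Import all_classical all_reals all_analysis.
From mathcomp Require Import ring lra.
Import Order.TTheory GRing.Theory Num.Theory.
Import numFieldNormedType.Exports.
Local Open Scope classical_set_scope.
Local Open Scope ring_scope.

Lemma int_lin (R : realType) (K a b : R) : a < b ->
  (\int[lebesgue_measure]_(x in `[a, b]) (K * x)%:E = (K * (b ^+ 2 - a ^+ 2) / 2)%:E)%E.
Proof.
move=> ab.
have D : forall x : R, is_derive x 1 (fun x : R => K * (x ^+ 2 / 2)) (K * x).
  move=> x. apply: is_derive_eq.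
  rewrite !scaler0 add0r -mulr2n -mulr_natl /GRing.scale /= mulr1.
  rewrite !mulr1; congr (_ * _); by rewrite -[x *+ 2]mulr_natl mulrA mulVf ?pnatr_eq0 // mul1r.
have dF : forall x : R, derivable (fun x : R => K * (x ^+ 2 / 2)) x 1.
  by move=> x; exact: (@ex_derive _ _ _ x 1 _ _ (D x)).
have cF : continuous (fun x : R => K * (x ^+ 2 / 2)).
  by move=> x; apply: differentiable_continuous; apply/derivable1_diffP; exact: dF.
rewrite (@continuous_FTC2 _ (fun x => K * x) (fun x : R => K * (x ^+ 2 / 2))) //.
- by rewrite -EFinD; congr (_%:E); rewrite -mulrBr -mulrBl mulrA.
- apply: continuous_subspaceT => x; apply: continuousM; first exact: cvg_cst.
  exact: cvg_id.
- split.
  + by move=> x _; exact: dF.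
  + by apply: cvg_at_right_filter; exact: cF.
  + by apply: cvg_at_left_filter; exact: cF.
- by move=> x _; have := D x; move=> Dx; rewrite derive1E derive_val.
Qed.

Lemma int_cst (R : realType) (C a b : R) : a < b ->
  (\int[lebesgue_measure]_(x in `[a, b]) C%:E = (C * (b - a))%:E)%E.
Proof.
move=> ab.
have D : forall x : R, is_derive x 1 (fun x : R => C * x) C.
  move=> x. apply: is_derive_eq.
  by rewrite /GRing.scale /= mulr1.
have dF : forall x : R, derivable (fun x : R => C * x) x 1.
  by move=> x; exact: (@ex_derive _ _ _ x 1 _ _ (D x)).
have cF : continuous (fun x : R => C * x).
  by move=> x; apply: differentiable_continuous; apply/derivable1_diffP; exact: dF.
rewrite (@continuous_FTC2 _ (fun x => C) (fun x : R => C * x)) //.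
- by rewrite -EFinD mulrBr.
- by apply: continuous_subspaceT => x; exact: cvg_cst.
- split.
  + by move=> x _; exact: dF.
  + by apply: cvg_at_right_filter; exact: cF.
  + by apply: cvg_at_left_filter; exact: cF.
- by move=> x _; have := D x; move=> Dx; rewrite derive1E derive_val.
Qed.

Lemma cmp_int (R : realType) (h g : R -> R) (a b : R) : a < b ->
  lebesgue_measure.-integrable `[a, b] (fun x => (h x)%:E) ->
  continuous g -> (forall x, a <= x -> x <= b -> h x <= g x) ->
  (\int[lebesgue_measure]_(x in `[a, b]) (h x)%:E <=
   \int[lebesgue_measure]_(x in `[a, b]) (g x)%:E)%E.
Proof.
move=> ab ih cg hg; apply: le_integral => //.
- apply: (@continuous_compact_integrable _ g); first exact: segment_compact.
  exact: continuous_subspaceT.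
- move=> x; rewrite inE /= in_itv /= => /andP[xa xb]; rewrite lee_fin; exact: hg.
Qed.

Lemma cmp_int' (R : realType) (h g : R -> R) (a b : R) : a < b ->
  lebesgue_measure.-integrable `[a, b] (fun x => (h x)%:E) ->
  continuous g -> (forall x, a <= x -> x <= b -> g x <= h x) ->
  (\int[lebesgue_measure]_(x in `[a, b]) (g x)%:E <=
   \int[lebesgue_measure]_(x in `[a, b]) (h x)%:E)%E.
Proof.
move=> ab ih cg hg; apply: le_integral => //.
- apply: (@continuous_compact_integrable _ g); first exact: segment_compact.
  exact: continuous_subspaceT.
- move=> x; rewrite inE /= in_itv /= => /andP[xa xb]; rewrite lee_fin; exact: hg.
Qed.

Lemma nu_diff (R : realType) (nu nu' : R -> R)
  (hint : forall r, 0 < r ->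
         lebesgue_measure.-integrable (`[r, +oo[ : set R) (fun rho => (nu' rho)%:E) /\
         nu r = - fine (\int[lebesgue_measure]_(rho in (`[r, +oo[ : set R)) (nu' rho)%:E))
  (a b : R) : 0 < a -> a < b ->
  lebesgue_measure.-integrable `[a, b] (fun x => (- nu' x)%:E) /\
  (nu a - nu b)%:E = (\int[lebesgue_measure]_(x in `[a, b]) (- nu' x)%:E)%E.
Proof.
move=> a0 ab.
have b0 : 0 < b by apply: lt_trans ab.
have [Ia ea] := hint a a0; have [Ib eb] := hint b b0.
have sab : `[a, b] `<=` `[a, +oo[.
  by move=> x /=; rewrite !in_itv /= => /andP[-> _].
have sab' : `[a, b[ `<=` `[a, +oo[.
  by move=> x /=; rewrite !in_itv /= => /andP[-> _].
have Iab : lebesgue_measure.-integrable `[a, b] (fun x => (nu' x)%:E).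
  exact: (@integrableS _ _ _ (@lebesgue_measure R) `[a,+oo[ `[a,b] (fun x => (nu' x)%:E) (measurable_itv _) (measurable_itv _) sab Ia).
have Iab' : lebesgue_measure.-integrable `[a, b[ (fun x => (nu' x)%:E).
  exact: (@integrableS _ _ _ (@lebesgue_measure R) `[a, +oo[ `[a, b[ (fun x => (nu' x)%:E) (measurable_itv _) (measurable_itv _) sab' Ia).
have eN : (fun x => (- nu' x)%:E) = (fun x => (-1)%:E * (nu' x)%:E)%E.
  by apply/funext => x; rewrite -EFinM mulN1r.
split.
  by rewrite eN; apply: integrableZl => //; exact: Iab.
rewrite eN integralZl //.
have sp : (`[a, +oo[%classic : set R) = `[a, b[%classic `|` `[b, +oo[%classic.
  by apply: itv_bndbnd_setU; rewrite bnd_simp // ltW.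
have dj : [disjoint (`[a, b[%classic : set R) & `[b, +oo[%classic].
  apply/disj_setPS => x [] /=; rewrite !in_itv /= andbT => /andP[_ xb] bx.
  by move: (lt_le_trans xb bx); rewrite ltxx.
have := Ia; rewrite sp => Iu.
move: ea; rewrite sp integral_setU //; last first.
  by case/integrableP: Iu.
rewrite integral_itv_bndo_bndc; last by case/integrableP: Iab'.
rewrite fineD ?(integrable_fin_num _ Iab) ?(integrable_fin_num _ Ib) //.
move=> ->; rewrite eb opprD opprK subrK mulN1e EFinN fineK //.
exact: (integrable_fin_num _ Iab).
Qed.
Lemma nup_le0 (R : realType) (nu' : R -> R)
  (hint : forall r, 0 < r ->
         lebesgue_measure.-integrable (`[r, +oo[ : set R) (fun rho => (nu' rho)%:E))
  (hmono : forall r s, 0 < r -> r <= s -> - nu' s / s <= - nu' r / r)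
  (r : R) : 0 < r -> nu' r <= 0.
Proof.
move=> r0; rewrite leNgt; apply/negP => p0.
have ge : forall s, r <= s -> nu' r <= nu' s.
  move=> s rs; have s0 : 0 < s by apply: lt_le_trans rs.
  have := hmono r s r0 rs; rewrite !mulNr lerN2 => h.
  have e1 : nu' s = nu' s / s * s by rewrite divfK // gt_eqF.
  have e2 : nu' r = nu' r / r * r by rewrite divfK // gt_eqF.
  have x0 : 0 < nu' r / r by rewrite divr_gt0.
  rewrite e1 e2; move: h x0; set x := nu' r / r; set y := nu' s / s => h x0.
  by nra.
have /integrableP[_ fin] := hint r r0.
have : (\int[lebesgue_measure]_(x in (`[r, +oo[%classic : set R)) (nu' r)%:E <=
        \int[lebesgue_measure]_(x in (`[r, +oo[%classic : set R)) `|(nu' x)%:E|)%E.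
  apply: ge0_le_integral => //.
  - by move=> x _; rewrite lee_fin ltW.
  - by case/integrableP: (integrable_abse (hint r r0)).
  - move=> x /=; rewrite in_itv /= andbT => rx.
    rewrite lee_fin; apply: le_trans (ge _ rx) _; exact: ler_norm.
rewrite integral_cst //= lebesgue_measure_itv /= ltry addye // gt0_muley ?lte_fin //.
rewrite leye_eq => /eqP h; by rewrite h ltxx in fin.
Qed.

Lemma nu_pos (R : realType) (d : nat) (nu nu' : R -> R) (a1 : R) :
  infinite_levy_radial_density d nu -> H1 nu nu' a1 ->
  forall r, 0 < r -> 0 < nu r.
Proof.
move=> [_ nu0 _ _ Hinf] [hm _ _ h1 h2] r0 r00.
rewrite lt_neqAle nu0 // andbT; apply/negP => /eqP e0.
have above : forall t, r0 <= t -> nu t = 0.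
  by move=> t rt; apply/eqP; rewrite eq_le nu0 ?(lt_le_trans r00) // andbT e0 hm.
have L1 : forall n : nat, forall t, 1 <= t -> r0 <= t + n%:R -> nu t = 0.
  elim=> [|n IH] t t1 rt; first by apply: above; rewrite addr0 in rt.
  have e : nu (t + 1) = 0.
    apply: IH; first by lra.
    by rewrite -natr1 in rt; lra.
  apply/eqP; rewrite eq_le nu0 ?(lt_le_trans _ t1) // andbT.
  by have := h1 t t1; rewrite e mulr0.
have nu1 : nu 1 = 0.
  apply: (L1 (Num.Def.archi_bound r0)) => //.
  have := archi_boundP (ltW r00); lra.
have L2 : forall n : nat, forall t, 0 < t -> 1 <= t * 2 ^+ n -> nu t = 0.
  elim=> [|n IH] t t0 tn.
    apply/eqP; rewrite eq_le nu0 // andbT -nu1 hm //; by rewrite expr0 mulr1 in tn.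
  have e : nu (2 * t) = 0.
    apply: IH; first by lra.
    by rewrite exprS mulrA [t * 2]mulrC in tn.
  apply/eqP; rewrite eq_le nu0 // andbT.
  have [t1|t1] := leP t 1.
    by have := h2 t t0 t1; rewrite e mulr0.
  by rewrite -nu1 hm // ltW.
have allz : forall t, 0 < t -> nu t = 0.
  move=> t t0; apply: (L2 (Num.Def.archi_bound t^-1)) => //.
  set n := Num.Def.archi_bound t^-1.
  have ti : 0 < t^-1 by rewrite invr_gt0.
  have h := archi_boundP (ltW ti).
  have hn : (n%:R : R) <= 2 ^+ n.
    by rewrite -natrX ler_nat ltnW // ltn_expl.
  by rewrite -ler_pdivrMl // mulr1; apply: le_trans (ltW h) hn.
move: Hinf.
rewrite (eq_integral (fun=> 0%E)); last first.
  by move=> x; rewrite inE /= in_itv /= andbT => x0; rewrite allz // mul0r.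
by rewrite integral0.
Qed.


Lemma nu_lower (R : realType) (nu nu' : R -> R)
  (hint : forall r, 0 < r ->
         lebesgue_measure.-integrable (`[r, +oo[ : set R) (fun rho => (nu' rho)%:E) /\
         nu r = - fine (\int[lebesgue_measure]_(rho in (`[r, +oo[ : set R)) (nu' rho)%:E))
  (hmono : forall r s, 0 < r -> r <= s -> - nu' s / s <= - nu' r / r)
  (a b : R) : 0 < a -> a < b ->
  (- nu' b / b) * (b ^+ 2 - a ^+ 2) / 2 <= nu a - nu b.
Proof.
move=> a0 ab; have [I e] := @nu_diff R nu nu' hint a b a0 ab.
rewrite -lee_fin e -int_lin //; apply: cmp_int' => //.
  by move=> x; apply: cvgM; [exact: cvg_cst | exact: cvg_id].
move=> x ax xb; have x0 : 0 < x by apply: lt_le_trans ax.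
by have := hmono x b x0 xb; rewrite ler_pdivlMr.
Qed.

Lemma nu_upper (R : realType) (nu nu' : R -> R)
  (hint : forall r, 0 < r ->
         lebesgue_measure.-integrable (`[r, +oo[ : set R) (fun rho => (nu' rho)%:E) /\
         nu r = - fine (\int[lebesgue_measure]_(rho in (`[r, +oo[ : set R)) (nu' rho)%:E))
  (hmono : forall r s, 0 < r -> r <= s -> - nu' s / s <= - nu' r / r)
  (a b : R) : 0 < a -> a < b ->
  nu a - nu b <= (- nu' a / a) * (b ^+ 2 - a ^+ 2) / 2.
Proof.
move=> a0 ab; have [I e] := @nu_diff R nu nu' hint a b a0 ab.
rewrite -lee_fin e -int_lin //; apply: cmp_int => //.
  by move=> x; apply: cvgM; [exact: cvg_cst | exact: cvg_id].
move=> x ax xb; have x0 : 0 < x by apply: lt_le_trans ax.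
have := hmono a x a0 ax; rewrite ler_pdivrMr //.
Qed.

Lemma nu_upper_cst (R : realType) (nu nu' : R -> R)
  (hint : forall r, 0 < r ->
         lebesgue_measure.-integrable (`[r, +oo[ : set R) (fun rho => (nu' rho)%:E) /\
         nu r = - fine (\int[lebesgue_measure]_(rho in (`[r, +oo[ : set R)) (nu' rho)%:E))
  (a b C : R) : 0 < a -> a < b -> (forall x, a <= x -> x <= b -> - nu' x <= C) ->
  nu a - nu b <= C * (b - a).
Proof.
move=> a0 ab hC; have [I e] := @nu_diff R nu nu' hint a b a0 ab.
rewrite -lee_fin e -int_cst //; apply: cmp_int => //.
by move=> x; exact: cvg_cst.
Qed.
Lemma ln_div (R : realType) (x y : R) : 0 < x -> 0 < y -> ln x - ln y = ln (x / y).
Proof.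
move=> x0 y0; rewrite lnM ?posrE ?invr_gt0 // lnV ?posrE //.
Qed.

Lemma ln_le_sub1 (R : realType) (x : R) : 0 < x -> ln x <= x - 1.
Proof.
move=> x0; have := @le_ln1Dx R (x - 1); rewrite [1 + _]addrC subrK; apply; lra.
Qed.

Lemma step_core (R : realType) (nua nub c a b r1 d : R) :
  0 <= c -> 0 < r1 -> r1 <= a -> a < b -> 0 < nua -> 0 < nub ->
  d = c * (a^-1 + 1) * (b - a) -> d <= 1/2 ->
  nua - nub <= d * nua ->
  (ln nua + c * ln a + c * a) - (ln nub + c * ln b + c * b) <=
  (c / r1 ^+ 2 + 2 * c ^+ 2 * (r1^-1 + 1) ^+ 2) * (b - a) ^+ 2.
Proof.
move=> c0 r0 r1a ab na nb de dh hd.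
have a0 : 0 < a by lra.
have b0 : 0 < b by lra.
have d0 : 0 <= d by rewrite de; apply: mulr_ge0; [apply: mulr_ge0 => //; rewrite addr_ge0 // invr_ge0 ltW | lra].
have h1 : nua <= nub * (1 + (d + 2 * d ^+ 2)).
  have hnb : nua * (1 - d) <= nub by lra.
  have hp : 0 <= 1 + (d + 2 * d ^+ 2) by nra.
  have := ler_wpM2r hp hnb.
  have e : nua * (1 - d) * (1 + (d + 2 * d ^+ 2)) = nua + nua * (d ^+ 2 * (1 - 2 * d)) by ring.
  have : 0 <= nua * (d ^+ 2 * (1 - 2 * d)).
    by apply: mulr_ge0; [exact: ltW | apply: mulr_ge0; [exact: sqr_ge0 | lra]].
  move=> hX; rewrite e => hh; lra.
have h2 : ln nua <= ln nub + (d + 2 * d ^+ 2).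
  have hq : 0 < 1 + (d + 2 * d ^+ 2) by nra.
  have := h1; rewrite -ler_ln ?posrE ?mulr_gt0 // lnM ?posrE // => h.
  have := @le_ln1Dx R (d + 2 * d ^+ 2); rewrite (_ : -1 < _); last by nra.
  move=> /(_ isT); lra.
have h3 : ln a - ln b <= a / b - 1 by rewrite ln_div //; apply: ln_le_sub1; rewrite divr_gt0.
set u := a^-1 in de; set v := b^-1 in h3; set w := r1^-1.
have ua : u * a = 1 by rewrite mulVf // gt_eqF.
have vb : v * b = 1 by rewrite mulVf // gt_eqF.
have wr : w * r1 = 1 by rewrite mulVf // gt_eqF.
have u0 : 0 < u by rewrite invr_gt0.
have v0 : 0 < v by rewrite invr_gt0.
have w0 : 0 < w by rewrite invr_gt0.
have uw : u <= w by rewrite /u /w lef_pV2 ?posrE.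
have vu : v <= u by rewrite /u /v lef_pV2 ?posrE // ltW.
have h4 : c * (ln a - ln b) <= c * (a * v - 1) by apply: ler_wpM2l.
have ir2 : r1 ^+ 2 = r1 * r1 by rewrite expr2.
rewrite -[c / r1 ^+ 2]/(c * (r1 ^+ 2)^-1) ir2 invfM -/w.
have hd2 : d ^+ 2 <= c ^+ 2 * (w + 1) ^+ 2 * (b - a) ^+ 2.
  rewrite de -!exprMn; apply: lerXn2r; rewrite ?inE ?nnegrE.
  - by apply: mulr_ge0; [apply: mulr_ge0 => //; rewrite addr_ge0 // ltW | lra].
  - by apply: mulr_ge0; [apply: mulr_ge0 => //; rewrite addr_ge0 // ltW | lra].
  - apply: ler_wpM2r; first lra.
    by apply: ler_wpM2l => //; rewrite lerD2r.
have hm : d + c * (a * v - 1) + c * (a - b) = c * (b - a) ^+ 2 * u * v.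
  rewrite de.
  have -> : c * (b - a) ^+ 2 * u * v = c * (b - a) * u * (v * b) - c * (b - a) * v * (u * a) by ring.
  rewrite vb ua.
  have -> : a * v - 1 = a * v - v * b by rewrite vb.
  ring.
have huv : u * v <= w * w.
  apply: ler_pM => //; [exact: ltW | exact: ltW | exact: le_trans vu uw].
have : c * (b - a) ^+ 2 * u * v <= c * (w * w) * (b - a) ^+ 2.
  have -> : c * (b - a) ^+ 2 * u * v = ((b - a) ^+ 2 * c) * (u * v) by ring.
  have -> : c * (w * w) * (b - a) ^+ 2 = ((b - a) ^+ 2 * c) * (w * w) by ring.
  by apply: ler_wpM2l => //; apply: mulr_ge0 => //; exact: sqr_ge0.
lra.
Qed.

Lemma tele_le (R : realType) (H : R -> R) (K r1 r2 eps : R) :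
  r1 < r2 -> 0 < eps ->
  (forall a b, r1 <= a -> a < b -> b - a <= eps -> H a - H b <= K * (b - a) ^+ 2) ->
  H r1 <= H r2.
Proof.
move=> r12 e0 hs; rewrite leNgt; apply/negP => hlt.
set D := r2 - r1; have D0 : 0 < D by rewrite /D subr_gt0.
set e := H r1 - H r2; have ep : 0 < e by rewrite /e subr_gt0.
set M := D / eps + `|K| * D ^+ 2 / e.
have M0 : 0 <= M.
  by rewrite /M addr_ge0 // ?divr_ge0 ?mulr_ge0 ?sqr_ge0 // ltW.
set n := Num.Def.archi_bound M.
have hn : M < n%:R by exact: archi_boundP.
have n0 : 0 < (n%:R : R) by apply: le_lt_trans hn.
set h := D / n%:R.
have h0 : 0 < h by rewrite divr_gt0.
have hn1 : h * n%:R = D by rewrite /h divfK // gt_eqF.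
have heps : h <= eps.
  have : D / eps < n%:R.
    apply: le_lt_trans hn; rewrite /M lerDl divr_ge0 // ?mulr_ge0 ?sqr_ge0 // ltW //.
  rewrite ltr_pdivrMr // => hD.
  rewrite /h ler_pdivrMr //; rewrite mulrC; exact: ltW.
set x := fun k : nat => r1 + k%:R * h.
have tel : \sum_(0 <= k < n) ((- H (x k.+1)) - (- H (x k))) = e.
  rewrite telescope_sumr // /x /= mul0r addr0 [n%:R * h]mulrC hn1 /D.
  by rewrite [r1 + _]addrC subrK /e opprK addrC.
have hsum : \sum_(0 <= k < n) ((- H (x k.+1)) - (- H (x k))) <= \sum_(0 <= k < n) (K * h ^+ 2).
  apply: ler_sum => k _.
  have ex : x k.+1 - x k = h by rewrite /x -natr1 mulrDl mul1r; ring.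
  have := hs (x k) (x k.+1).
  rewrite ex; rewrite opprK addrC; apply.
  - by rewrite /x lerDl mulr_ge0 // ltW.
  - by rewrite -subr_gt0 ex.
  - exact: heps.
move: hsum; rewrite tel sumr_const_nat subn0 -mulr_natr => he.
have : e <= `|K| * D ^+ 2 / n%:R.
  apply: (le_trans he).
  have -> : K * h ^+ 2 * n%:R = K * D ^+ 2 / n%:R.
    by rewrite /h; field; rewrite gt_eqF.
  apply: ler_wpM2r; first by rewrite invr_ge0 ltW.
  by apply: ler_wpM2r; [exact: sqr_ge0 | exact: ler_norm].
rewrite ler_pdivlMr // => hh.
have : `|K| * D ^+ 2 / e < n%:R.
  by apply: le_lt_trans hn; rewrite /M lerDr divr_ge0 // ltW.
rewrite ltr_pdivrMr // => hh2.
have : e * n%:R < e * n%:R.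
  by apply: (le_lt_trans hh); rewrite [e * _]mulrC.
by rewrite ltxx.
Qed.

Lemma fbound (R : realType) (fx nx na a x c : R) :
  0 < a -> a <= x -> 0 <= c -> 0 <= fx -> 0 < nx -> nx <= na ->
  fx * Num.min x 1 <= c * nx -> fx <= c * (a^-1 + 1) * na.
Proof.
move=> a0 ax c0 f0 n0 nxa h.
have na0 : 0 < na by apply: lt_le_trans nxa.
have cn : c * nx <= c * na by apply: ler_wpM2l.
have ai : a * a^-1 = 1 by rewrite mulfV // gt_eqF.
have ai0 : 0 < a^-1 by rewrite invr_gt0.
have [x1|x1] := leP x 1.
  rewrite min_l // in h.
  have h' : fx * a <= c * na.
    apply: le_trans cn; apply: le_trans h; apply: ler_wpM2l => //.
  have : fx * a * a^-1 <= c * na * a^-1 by apply: ler_wpM2r => //; exact: ltW.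
  rewrite -mulrA ai mulr1 => h2.
  have : 0 <= c * na by apply: mulr_ge0 => //; exact: ltW.
  have e : c * (a^-1 + 1) * na = c * na * a^-1 + c * na by ring.
  rewrite e; lra.
rewrite min_r ?mulr1 in h; last exact: ltW.
have e : c * (a^-1 + 1) * na = c * na * a^-1 + c * na by ring.
have : 0 <= c * na * a^-1 by apply: mulr_ge0; [apply: mulr_ge0 => //; exact: ltW | exact: ltW].
rewrite e; lra.
Qed.

Theorem lemma5p1 (R : realType) (d : nat) (nu nu' : R -> R) (a1 : R) :
  infinite_levy_radial_density d nu ->
  H1 nu nu' a1 ->
  [/\ (forall r, 0 < r ->
         `| nu' r / nu r | <= 3 * (a1 - 1) / Num.min r 1),
      (forall r1 r2, 0 < r1 -> r1 < r2 ->
         nu r1 / nu r2 <= (r2 / r1) `^ (3 * (a1 - 1)) * expR (3 * (a1 - 1) * (r2 - r1))) &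
      (forall r1 r2, 0 < r1 -> r1 < r2 ->
         nu r1 - nu r2 <= 3 / 2 * (a1 - 1) * (nu r1 / Num.min 1 r1) * (r2 - r1) * (1 + r2 / r1))].
Proof.
move=> HL H.
have Hp := @nu_pos R d nu nu' a1 HL H.
case: H => hm hint hmono h1 h2.
have np : forall r, 0 < r -> nu' r <= 0.
  by move=> r r0; exact: (@nup_le0 R nu' (fun r r0 => (hint r r0).1) hmono r r0).
have a1ge : 1 <= a1.
  have := h2 1 ltr01 (lexx 1); rewrite mulr1 => e.
  have := hm 1 2 ltr01 ltac:(lra).
  have := Hp 1 ltr01; have := Hp 2 ltac:(lra).
  nra.
have P1 : forall r, 0 < r -> - nu' r * Num.min r 1 <= 3 * (a1 - 1) * nu r.
  move=> r r0; have f0 := np r r0; have nr := Hp r r0.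
  set q := - nu' r / r.
  have q0 : 0 <= q by rewrite /q divr_ge0 ?oppr_ge0 // ltW.
  have fr : - nu' r = q * r by rewrite /q divfK // gt_eqF.
  rewrite fr.
  have [r2|r2] := leP r 2.
    have hl := @nu_lower R nu nu' hint hmono (r / 2) r ltac:(lra) ltac:(lra).
    have e2 := h2 (r / 2) ltac:(lra) ltac:(lra).
    rewrite (_ : 2 * (r / 2) = r) in e2; last by field.
    rewrite -/q in hl.
    have E : q * (r ^+ 2 - (r / 2) ^+ 2) / 2 = 3 / 8 * (q * r ^+ 2) by field.
    rewrite E in hl.
    have [r1|r1] := leP r 1.
      have -> : q * r * r = q * r ^+ 2 by rewrite expr2 mulrA.
      have : 0 <= q * r ^+ 2 by apply: mulr_ge0 => //; exact: sqr_ge0.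
      lra.
    rewrite ?mulr1.
    have : q * r <= q * r ^+ 2.
      rewrite expr2 mulrA; rewrite -{1}[q * r]mulr1; apply: ler_wpM2l; last exact: ltW.
      by apply: mulr_ge0 => //; exact: ltW.
    have : 0 <= q * r by apply: mulr_ge0 => //; exact: ltW.
    lra.
  have hl := @nu_lower R nu nu' hint hmono (r - 1) r ltac:(lra) ltac:(lra).
  have e1 := h1 (r - 1) ltac:(lra).
  rewrite subrK in e1.
  rewrite -/q in hl.
  have E : q * (r ^+ 2 - (r - 1) ^+ 2) / 2 = q * r - q / 2 by field.
  rewrite E in hl.
  rewrite min_r ?mulr1; last by lra.
  have : q <= q * r / 2.
    rewrite -mulrA; rewrite -{1}[q]mulr1; apply: ler_wpM2l => //; lra.
  have : 0 <= q * r by apply: mulr_ge0 => //; exact: ltW.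
  lra.
split.
- move=> r r0; have nr := Hp r r0.
  have m0 : 0 < Num.min r 1 by rewrite lt_min r0 ltr01.
  rewrite ler0_norm; last by rewrite mulr_le0_ge0 // ?invr_ge0 ?np // ltW.
  rewrite -mulNr ler_pdivlMr // mulrAC ler_pdivrMr //.
  exact: P1.
- move=> r1 r2 r10 r12.
  set c := 3 * (a1 - 1).
  have c0 : 0 <= c by rewrite /c; lra.
  set Hf := fun x => ln (nu x) + c * ln x + c * x.
  set K := c / r1 ^+ 2 + 2 * c ^+ 2 * (r1^-1 + 1) ^+ 2.
  set C := c * (r1^-1 + 1).
  have C0 : 0 <= C by rewrite /C mulr_ge0 // addr_ge0 // invr_ge0 ltW.
  set eps := (2 * C + 2)^-1.
  have eps0 : 0 < eps by rewrite /eps invr_gt0; lra.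
  have Ceps : C * eps <= 1 / 2 by rewrite /eps ler_pdivrMr; lra.
  have HH : Hf r1 <= Hf r2.
    apply: (@tele_le R Hf K r1 r2 eps) => // a b r1a ab hba.
    have a0 : 0 < a by apply: lt_le_trans r1a.
    have b0 : 0 < b by apply: lt_trans ab.
    have na := Hp a a0; have nb := Hp b b0.
    have hC : forall x, a <= x -> x <= b -> - nu' x <= c * (a^-1 + 1) * nu a.
      move=> x ax xb; have x0 : 0 < x by apply: lt_le_trans ax.
      apply: (@fbound R (- nu' x) (nu x) (nu a) a x c) => //.
      - by rewrite oppr_ge0 np.
      - exact: Hp.
      - exact: hm.
      - exact: P1.
    have hu := @nu_upper_cst R nu nu' hint a b (c * (a^-1 + 1) * nu a) a0 ab hC.
    have ai : a^-1 <= r1^-1 by rewrite lef_pV2 ?posrE.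
    have dle : c * (a^-1 + 1) * (b - a) <= 1 / 2.
      apply: le_trans Ceps; rewrite /C.
      apply: ler_pM.
      - by apply: mulr_ge0 => //; rewrite addr_ge0 // invr_ge0 ltW.
      - by rewrite subr_ge0 ltW.
      - by apply: ler_wpM2l => //; rewrite lerD2r.
      - exact: hba.
    apply: (@step_core R (nu a) (nu b) c a b r1 (c * (a^-1 + 1) * (b - a))) => //.
    by move: hu; rewrite mulrAC.
  have pr : 0 < r2 / r1 by rewrite divr_gt0 // (lt_trans r10).
  have r20 : 0 < r2 by apply: lt_trans r12.
  rewrite -ler_ln ?posrE ?divr_gt0 ?mulr_gt0 ?powR_gt0 ?expR_gt0 ?Hp //.
  rewrite -ln_div ?Hp //.
  rewrite lnM ?posrE ?powR_gt0 ?expR_gt0 // ln_powR expRK -ln_div //.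
  move: HH; rewrite /Hf; lra.
- move=> r1 r2 r10 r12.
  have r20 : 0 < r2 by apply: lt_trans r12.
  have hu := @nu_upper R nu nu' hint hmono r1 r2 r10 r12.
  have p1 := P1 r1 r10.
  set q := - nu' r1 / r1 in hu.
  have q0 : 0 <= q by rewrite /q divr_ge0 ?oppr_ge0 ?np // ltW.
  have fr : - nu' r1 = q * r1 by rewrite /q divfK // gt_eqF.
  rewrite fr minC in p1.
  set m := Num.min 1 r1 in p1 *.
  have m0 : 0 < m by rewrite /m lt_min r10 ltr01.
  set N := nu r1 / m.
  have qN : q * r1 <= 3 * (a1 - 1) * N.
    by rewrite /N mulrA ler_pdivlMr.
  have E1 : q * (r2 ^+ 2 - r1 ^+ 2) / 2 = (q * r1) * ((r2 - r1) * (1 + r2 / r1) / 2).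
    by field; rewrite gt_eqF.
  have E2 : 3 / 2 * (a1 - 1) * N * (r2 - r1) * (1 + r2 / r1) =
            (3 * (a1 - 1) * N) * ((r2 - r1) * (1 + r2 / r1) / 2).
    by field; rewrite gt_eqF.
  rewrite E2; apply: le_trans hu _; rewrite E1.
  apply: ler_wpM2r => //.
  apply: mulr_ge0; last by [].
  apply: mulr_ge0; first by rewrite subr_ge0 ltW.
  by rewrite addr_ge0 // divr_ge0 // ltW.
Qed.
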